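(* Suppose there exists a decomposition $U_0,U_1,\ldots,U_d$ of $V$ which is split with respect to the orderings $E_0,\ldots,E_d$ and $E^*_0,\ldots,E^*_d$. Then for $0\le i\le d$: (i) $\sum_{h=0}^iU_h=\sum_{h=0}^iA^hE^*_0V$; (ii) $\sum_{h=0}^iU_h=\sum_{h=0}^iE^*_hV$; (iii) $\sum_{h=i}^dU_h=\sum_{h=0}^{d-i}A^{*h}E_dV$; (iv) $\sum_{h=i}^dU_h=\sum_{h=i}^dE_hV$; (v) $U_i=(E^*_0V+E^*_1V+\cdots+E^*_iV)\cap(E_iV+E_{i+1}V+\cdots+E_dV)$.
   Context: Let $\mathbb K$ be a field, $d\ge 0$ an integer, and $\mathcal A$ a $\mathbb K$-algebra isomorphic to $\mathrm{Mat}_{d+1}(\mathbb K)$, with identity $I$. An element of $\mathcal A$ is multiplicity-free if it has $d+1$ mutually distinct eigenvalues, all in $\mathbb K$; for such $A$ with eigenvalues $\theta_0,\ldots,\theta_d$, the primitive idempotent associated with $\theta_i$ is $E_i=\prod_{j\ne i}(A-\theta_jI)/(\theta_i-\theta_j)$. Standing setup: $A,A^*$ are multiplicity-free elements of $\mathcal A$ ($A^*$ is just a name, not an adjoint); $E_0,\ldots,E_d$ is an ordering of the primitive idempotents of $A$ and $\theta_i$ is the eigenvalue of $A$ for $E_i$; $E^*_0,\ldots,E^*_d$ is an ordering of the primitive idempotents of $A^*$ and $\theta^*_i$ is the eigenvalue of $A^*$ for $E^*_i$; $V$ is an irreducible left $\mathcal A$-module. A decomposition of $V$ is a sequence $U_0,\ldots,U_d$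 of 1-dimensional subspaces with $V=U_0+\cdots+U_d$ (direct sum). Such a decomposition is split (with respect to the orderings $E_0,\ldots,E_d$ and $E^*_0,\ldots,E^*_d$) if $(A-\theta_iI)U_i=U_{i+1}$ for $0\le i\le d-1$, $(A-\theta_dI)U_d=0$, $(A^*-\theta^*_iI)U_i=U_{i-1}$ for $1\le i\le d$, and $(A^*-\theta^*_0I)U_0=0$. *)

(* Defs.v *)
From HB Require Import structures.
From mathcomp Require Import all_boot all_order all_algebra.
Set Implicit Arguments. Unset Strict Implicit. Unset Printing Implicit Defensive.
Import GRing.Theory.
Local Open Scope ring_scope.

(* Model: the algebra is 'M[K]_n (n = d+1) and V = K^n (column vectors),
   with the natural left action a . v = a *m v.  A subspace W of V is
   encoded (mxalgebra convention) as the row space of a matrix whose rows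
   are the transposes of spanning vectors; hence a . W is encoded by W *m a^T. *)
Definition act (K : fieldType) (n m : nat) (a : 'M[K]_n) (W : 'M[K]_(m, n))
  : 'M[K]_(m, n) := W *m a^T.

Definition Vfull (K : fieldType) (n : nat) : 'M[K]_n := 1%:M.

(* th is an ordering of d+1 mutually distinct eigenvalues of A in K
   (so A is multiplicity-free and th_0..th_d lists all its eigenvalues). *)
Definition eig_ordering (K : fieldType) (n : nat) (A : 'M[K]_n) (th : 'I_n -> K) :=
  injective th /\ forall i, eigenvalue A (th i).

Definition multiplicity_free (K : fieldType) (n : nat) (A : 'M[K]_n) :=
  exists th : 'I_n -> K, eig_ordering A th.

Definition prim_idem (K : fieldType) (d : nat) (A : 'M[K]_d.+1)
  (th : 'I_d.+1 -> K) (i : 'I_d.+1) : 'M[K]_d.+1 :=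
  \prod_(j < d.+1 | j != i) ((th i - th j)^-1 *: (A - (th j)%:M)).

Definition decomposition (K : fieldType) (d : nat) (U : 'I_d.+1 -> 'M[K]_d.+1) :=
  [/\ forall i, \rank (U i) = 1%N,
      (\sum_(i < d.+1) U i == Vfull K d.+1)%MS &
      mxdirect (\sum_(i < d.+1) U i)].

Definition split_decomposition (K : fieldType) (d : nat) (A As : 'M[K]_d.+1)
  (th ths : 'I_d.+1 -> K) (U : 'I_d.+1 -> 'M[K]_d.+1) :=
  [/\ decomposition U,
      forall i : 'I_d.+1, (i < d)%N ->
        (act (A - (th i)%:M) (U i) == U (inord i.+1))%MS,
      (act (A - (th ord_max)%:M) (U ord_max) == 0 :> 'M[K]_d.+1)%MS,
      forall i : 'I_d.+1, (0 < i)%N ->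
        (act (As - (ths i)%:M) (U i) == U (inord i.-1))%MS &
      (act (As - (ths ord0)%:M) (U ord0) == 0 :> 'M[K]_d.+1)%MS].

(* Main.v *)
Require Import Defs.
From HB Require Import structures.
From mathcomp Require Import all_boot all_order all_algebra.
From mathcomp Require Import zify ring.
Set Implicit Arguments. Unset Strict Implicit. Unset Printing Implicit Defensive.
Import GRing.Theory.
Local Open Scope ring_scope.

Section Aux.
Variables (K : fieldType) (d : nat).
Local Notation n := d.+1.

Definition pE (th : 'I_n -> K) (l : 'I_n) : {poly K} :=
  \prod_(j < n | j != l) ((th l - th j)^-1 *: ('X - (th j)%:P)).

Lemma horner_pE (M : 'M[K]_n) th l : horner_mx M (pE th l) = prim_idem M th l.
Proof.
rewrite /pE /prim_idem rmorph_prod; apply: eq_bigr => j _.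
by rewrite /= horner_mxZ rmorphB /= horner_mx_X horner_mx_C.
Qed.

Lemma pE_eval th (inj : injective th) l m : (pE th l).[th m] = (m == l)%:R.
Proof.
rewrite /pE horner_prod.
case: eqP => [->|/eqP ml].
  rewrite big1 // => j jl; rewrite hornerZ hornerXsubC mulVf // subr_eq0.
  by apply: contra jl => /eqP/inj ->.
by rewrite (bigD1 m) //= hornerZ hornerXsubC subrr mulr0 mul0r.
Qed.

Lemma CH (M : 'M[K]_n) th (hM : eig_ordering M th) (p : {poly K}) :
  (forall m, root p (th m)) -> horner_mx M p = 0.
Proof.
case: hM => inj heig rp.
set rs := [seq th m | m <- enum 'I_n].
have urs : uniq_roots rs by rewrite uniq_rootsE map_inj_uniq ?enum_uniq.
have d1 : \prod_(z <- rs) ('X - z%:P) %| char_poly M.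
  apply: uniq_roots_dvdp urs; apply/allP => _ /mapP[m _ ->].
  by rewrite -eigenvalue_root_char.
have e1 : \prod_(z <- rs) ('X - z%:P) %= char_poly M.
  by rewrite -dvdp_size_eqp // size_char_poly size_prod_XsubC size_map size_enum_ord.
have : char_poly M %| p.
  rewrite -(eqp_dvdl _ e1); apply: uniq_roots_dvdp urs.
  by apply/allP => _ /mapP[m _ ->].
case/dvdpP => q ->; by rewrite rmorphM /= Cayley_Hamilton mulr0.
Qed.


Lemma eig_rank (M : 'M[K]_n) th (hM : eig_ordering M th) l :
  (\rank (eigenspace M (th l)) <= 1)%N.
Proof.
case: hM => inj heig.
have /mxdirectP /= hd := @mxdirect_sum_eigenspace _ _ _ M predT th (in2W inj).
have ge1 : forall i, (0 < \rank (eigenspace M (th i)))%N.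
  by move=> i; rewrite lt0n mxrank_eq0; apply: heig.
have := rank_leq_col (\sum_i eigenspace M (th i))%MS.
rewrite hd (bigD1 l) //=.
have : (d <= \sum_(i < n | i != l) \rank (eigenspace M (th i)))%N.
  have h1 : (\sum_(i < n | i != l) 1 <= \sum_(i < n | i != l) \rank (eigenspace M (th i)))%N.
    by apply: leq_sum => i _; apply: ge1.
  by move: h1; rewrite sum1_card cardC1 card_ord.
move=> h2 h3; rewrite -(leq_add2r (\sum_(i < n | i != l) \rank (eigenspace M (th i)))).
apply: leq_trans h3 _; by rewrite add1n ltnS.
Qed.


Lemma idem_eig (M : 'M[K]_n) th (hM : eig_ordering M th) l :
  (prim_idem M th l <= eigenspace M (th l))%MS.
Proof.
have h0 : horner_mx M (pE th l * ('X - (th l)%:P)) = 0.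
  apply: (CH hM) => m; rewrite rootM root_XsubC.
  case: (eqVneq m l) => [->|ml]; first by rewrite eqxx orbT.
  by rewrite /root pE_eval ?(eqP ml) ?(negPf ml) ?eqxx //; case: hM.
move: h0; rewrite rmorphM /= horner_pE rmorphB /= horner_mx_X horner_mx_C.
move=> h0; apply/eigenspaceP; apply/eqP; rewrite -subr_eq0.
by rewrite -mul_mx_scalar -mulmxBr; apply/eqP; exact: h0.
Qed.

Lemma idem_rank (M : 'M[K]_n) th (hM : eig_ordering M th) l :
  (\rank (prim_idem M th l) <= 1)%N.
Proof. exact: leq_trans (mxrankS (idem_eig hM l)) (eig_rank hM l). Qed.

Lemma sum_idem (M : 'M[K]_n) th (hM : eig_ordering M th) :
  \sum_l prim_idem M th l = 1.
Proof.
have : horner_mx M (\sum_l pE th l - 1) = 0.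
  apply: (CH hM) => m; apply/rootP; rewrite hornerD hornerN horner_sum hornerC.
  rewrite (bigD1 m) //= pE_eval ?eqxx; last by case: hM.
  rewrite big1 ?addr0 ?subrr // => l lm; rewrite pE_eval; last by case: hM.
  by rewrite eq_sym (negPf lm).
rewrite rmorphB rmorph_sum rmorph1 /= => /eqP; rewrite subr_eq0 => /eqP <-.
by apply: eq_bigr => l _; rewrite horner_pE.
Qed.


Lemma kerlem (M : 'M[K]_n) (t : nat -> K) (X : nat -> 'M[K]_n)
  (h0 : X 0%N *m (M - (t 0%N)%:M)^T = 0)
  (hs : forall k, (0 < k <= d)%N -> (X k *m (M - (t k)%:M)^T <= X k.-1)%MS) :
  forall k, (k <= d)%N -> forall p,
    \prod_(z <- map t (iota 0 k.+1)) ('X - z%:P) %| p ->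
    X k *m (horner_mx M p)^T = 0.
Proof.
elim=> [|k IH] hk p /dvdpP [q ->].
  rewrite /= big_cons big_nil mulr1 rmorphM /= rmorphB /= horner_mx_X horner_mx_C.
  by rewrite -mulmxE trmx_mul mulmxA h0 mul0mx.
have -> : iota 0 k.+2 = iota 0 k.+1 ++ [:: k.+1] by rewrite -addn1 iotaD.
rewrite map_cat big_cat /= big_seq1 mulrA.
rewrite rmorphM /= rmorphB /= horner_mx_X horner_mx_C -mulmxE trmx_mul mulmxA.
have /submxP [D ->] := hs k.+1 hk.
rewrite -mulmxA IH ?mulmx0 //; first exact: ltnW.
by apply: dvdp_mull; rewrite dvdpp.
Qed.


Lemma dvd_pE th (inj : injective th) l (rs : seq K) :
  uniq rs -> (forall z, z \in rs -> exists2 m, m != l & z = th m) ->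
  \prod_(z <- rs) ('X - z%:P) %| pE th l.
Proof.
move=> urs hrs; apply: uniq_roots_dvdp; last by rewrite uniq_rootsE.
apply/allP => z /hrs [m ml ->]; apply/rootP; rewrite pE_eval //.
by rewrite (negPf ml).
Qed.


Lemma rank_sums_le (I : Type) (r : seq I) (P : pred I) (F : I -> 'M[K]_n) :
  (\rank (\sum_(i <- r | P i) F i)%MS <= \sum_(i <- r | P i) \rank (F i))%N.
Proof.
elim/big_ind2 : _ => [|a x b y ha hb|i _]; first by rewrite mxrank0.
  by apply: leq_trans (mxrank_adds_leqif a b) _; apply: leq_add.
by [].
Qed.

Lemma rank_sub (U : 'I_n -> 'M[K]_n) (rk : forall h, \rank (U h) = 1%N)
  (full : (\sum_h U h == 1%:M)%MS) (P : pred 'I_n) :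
  \rank (\sum_(h | P h) U h)%MS = #|P|.
Proof.
have r1 : \rank (\sum_h U h)%MS = n by rewrite (eqmx_rank full) mxrank1.
have hP (Q : pred 'I_n) : (\rank (\sum_(h | Q h) U h)%MS <= #|Q|)%N.
  apply: leq_trans (rank_sums_le _ _ _) _.
  by rewrite (eq_bigr (fun _ => 1%N)) ?sum1_card // => h _; rewrite rk.
have := mxrank_adds_leqif (\sum_(h | P h) U h)%MS (\sum_(h | ~~ P h) U h)%MS.
have eS : (\sum_h U h = \sum_(h | P h) U h + \sum_(h | ~~ P h) U h)%MS by apply: bigID.
rewrite -eS r1 => [[le _]].
have h1 := hP P; have h2 := hP (predC P).
have := cardC P; rewrite card_ord.
move: le h1 h2; rewrite /=.
set a := \rank _; set b := \rank _.
set c := #|P|. set e := #|predC P|.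
move=> h3 h4 h5 h6; apply/eqP; rewrite eqn_leq h4 /=.
rewrite -(leq_add2r b); apply: leq_trans _ h3. rewrite -h6 leq_add2l. exact: h5.
Qed.


Lemma Gside (M : 'M[K]_n) th (hM : eig_ordering M th)
  (U : 'I_n -> 'M[K]_n) (rk : forall h, \rank (U h) = 1%N)
  (full : (\sum_h U h == 1%:M)%MS) (P : pred 'I_n)
  (hker : forall h l, P h -> ~~ P l -> U h *m (prim_idem M th l)^T = 0) :
  (\sum_(h | P h) U h == \sum_(h | P h) (prim_idem M th h)^T)%MS.
Proof.
have le : (\sum_(h | P h) U h <= \sum_(h | P h) (prim_idem M th h)^T)%MS.
  apply/sumsmx_subP => h Ph.
  have e1 : (1%:M : 'M[K]_n) = \sum_l prim_idem M th l by rewrite sum_idem.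
  rewrite -[U h]mulmx1 -trmx1 e1 raddf_sum mulmx_sumr.
  apply: summx_sub => l _; case Pl: (P l).
    by apply: (sumsmx_sup l) => //; apply: submxMl.
  by rewrite hker ?Pl // sub0mx.
apply/andP; split => //; rewrite -(mxrank_leqif_sup le) rank_sub //.
rewrite eqn_leq; apply/andP; split; last first.
  apply: leq_trans (rank_sums_le _ _ _) _.
  rewrite -sum1_card; apply: leq_sum => h _; rewrite mxrank_tr; exact: idem_rank.
by rewrite -(rank_sub rk full P); exact: mxrankS.
Qed.


Lemma sum_mono (F : nat -> 'M[K]_n) j j' : (j <= j')%N ->
  (\sum_(k < n | (k <= j)%N) F k <= \sum_(k < n | (k <= j')%N) F k)%MS.
Proof.
move=> jj; apply/sumsmx_subP => k hk; apply: (sumsmx_sup k) => //.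
exact: leq_trans hk jj.
Qed.

Lemma sum_in (F : nat -> 'M[K]_n) j k : (k <= j)%N -> (k <= d)%N ->
  (F k <= \sum_(h < n | (h <= j)%N) F h)%MS.
Proof.
move=> kj kd; apply: (sumsmx_sup (inord k)); rewrite inordK //.
Qed.

Lemma subB (Z C M : 'M[K]_n) c : (Z <= C)%MS -> (Z *m M^T <= C)%MS ->
  (Z *m (M - c%:M)^T <= C)%MS.
Proof.
rewrite linearB /= tr_scalar_mx mulmxBr mul_mx_scalar => h1 h2.
by apply: addmx_sub => //; rewrite -scaleNr; apply: scalemx_sub.
Qed.

Lemma krylov (M : 'M[K]_n) (t : nat -> K) (X : nat -> 'M[K]_n) (Y : 'M[K]_n)
  (hY : (Y == X 0%N)%MS)
  (hs : forall k, (k < d)%N -> (X k *m (M - (t k)%:M)^T == X k.+1)%MS) :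
  forall i, (i <= d)%N ->
  (\sum_(k < n | (k <= i)%N) X k == \sum_(k < n | (k <= i)%N) Y *m (M ^+ k)^T)%MS.
Proof.
set W := fun j => (\sum_(k < n | (k <= j)%N) X k)%MS.
set R := fun j => (\sum_(k < n | (k <= j)%N) Y *m (M ^+ k)^T)%MS.
have hY1 : (Y <= X 0%N)%MS by case/andP: hY.
have hY2 : (X 0%N <= Y)%MS by case/andP: hY.
have hA k : (k < d)%N -> (X k *m M^T <= X k + X k.+1)%MS.
  move=> kd; have := hs k kd; case/andP => h1 _.
  have -> : X k *m M^T = X k *m (M - (t k)%:M)^T + t k *: X k.
    by rewrite linearB /= tr_scalar_mx mulmxBr mul_mx_scalar subrK.
  by rewrite addrC; apply: addmx_sub_adds => //; apply: scalemx_sub.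
have hR k : (k < d)%N -> (R k *m M^T <= R k.+1)%MS.
  move=> kd; rewrite /R sumsmxMr.
  apply/sumsmx_subP => h hk; rewrite -mulmxA -trmx_mul. have -> : M *m M ^+ h = M ^+ h.+1 by rewrite exprS mulmxE.
  by apply: (sum_in (fun h => Y *m (M ^+ h)^T)) => //; apply: leq_trans kd.
have hW k : (k < d)%N -> (W k *m M^T <= W k.+1)%MS.
  move=> kd; rewrite /W sumsmxMr; apply/sumsmx_subP => h hk.
  have hd : (h < d)%N by apply: leq_ltn_trans kd.
  apply: submx_trans (hA h hd) _; rewrite addsmx_sub; apply/andP; split.
    by apply: (sum_in X) => //; [apply: leqW | apply: ltnW].
  by apply: (sum_in X).
have hXR k : (k <= d)%N -> (X k <= R k)%MS.
  elim: k => [|k IH] kd.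
    apply: submx_trans hY2 _; apply: (sumsmx_sup ord0) => //=.
    by rewrite expr0 trmx1 mulmx1.
  apply: submx_trans (proj2 (andP (hs k kd))) _.
  apply: submx_trans (submxMr _ (IH (ltnW kd))) _.
  apply: subB; last exact: hR.
  exact: (sum_mono (fun h => Y *m (M ^+ h)^T) (leqnSn k)).
have hYW k : (k <= d)%N -> (Y *m (M ^+ k)^T <= W k)%MS.
  elim: k => [|k IH] kd.
    rewrite expr0 trmx1 mulmx1; apply: submx_trans hY1 _.
    by apply: (sum_in X).
  rewrite exprS -mulmxE trmx_mul mulmxA.
  apply: submx_trans (hW k kd); apply: submxMr; apply: IH; exact: ltnW.
move=> i id; apply/andP; split; apply/sumsmx_subP => h hi.
  apply: submx_trans (hXR h (leq_trans hi id)) _.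
  exact: (sum_mono (fun h => Y *m (M ^+ h)^T)).
apply: submx_trans (hYW h (leq_trans hi id)) _.
exact: (sum_mono X).
Qed.

End Aux.

Unset Implicit Arguments.

Theorem lemma2p4 (K : fieldType) (d : nat) (A As : 'M[K]_d.+1)
  (th ths : 'I_d.+1 -> K)
  (hA : eig_ordering A th) (hAs : eig_ordering As ths)
  (U : 'I_d.+1 -> 'M[K]_d.+1)
  (hU : split_decomposition A As th ths U) :
  let E := prim_idem A th in
  let Es := prim_idem As ths in
  let V := Vfull K d.+1 in
  forall i : 'I_d.+1,
  [/\ (\sum_(h < d.+1 | (h <= i)%N) U h ==
         \sum_(h < d.+1 | (h <= i)%N) act (A ^+ h) (act (Es ord0) V))%MS,
      (\sum_(h < d.+1 | (h <= i)%N) U h ==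
         \sum_(h < d.+1 | (h <= i)%N) act (Es h) V)%MS,
      (\sum_(h < d.+1 | (i <= h)%N) U h ==
         \sum_(h < d.+1 | (h <= d - i)%N) act (As ^+ h) (act (E ord_max) V))%MS,
      (\sum_(h < d.+1 | (i <= h)%N) U h ==
         \sum_(h < d.+1 | (i <= h)%N) act (E h) V)%MS &
      (U i == (\sum_(h < d.+1 | (h <= i)%N) act (Es h) V) :&:
              (\sum_(h < d.+1 | (i <= h)%N) act (E h) V))%MS].
Proof.
move=> E Es V i.
case: hU => [[rk full dir] hup hmax hdown h0].
have fullV : (\sum_h U h == 1%:M)%MS by exact: full.
have actV (N : 'M[K]_d.+1) : act N V = N^T by rewrite /act /V /Vfull mul1mx.
have injA := proj1 hA; have injAs := proj1 hAs.
have hi := ltn_ord i.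
have ii : forall j : nat,
    (\sum_(h < d.+1 | (h <= j)%N) U h == \sum_(h < d.+1 | (h <= j)%N) (Es h)^T)%MS.
  move=> j; apply: (Gside hAs rk fullV) => h l hj lj.
  have hd := ltn_ord h; have ld := ltn_ord l.
  have h0' : U (inord 0) *m (As - (ths (inord 0))%:M)^T = 0.
    have -> : inord 0 = ord0 :> 'I_d.+1 by apply: val_inj; rewrite /= inordK.
    by move/eqP: h0.
  have hs' : forall k, (0 < k <= d)%N ->
      (U (inord k) *m (As - (ths (inord k))%:M)^T <= U (inord k.-1))%MS.
    move=> k /andP [k0 kd].
    have := hdown (inord k); rewrite /act inordK // => /(_ k0) /andP [] //.
  have := @kerlem K d As (fun k => ths (inord k)) (fun k => U (inord k)) h0' hs' h _
    (pE ths l).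
  rewrite horner_pE inord_val; apply; first by rewrite -ltnS.
  apply: dvd_pE => //.
    rewrite map_inj_in_uniq ?iota_uniq // => a b.
    rewrite !mem_iota /= !add0n => ha hb /injAs /(congr1 val).
    rewrite /= !inordK //; lia.
  move=> z /mapP [a]; rewrite mem_iota add0n => /andP [_ ha] ->.
  exists (inord a) => //; apply/eqP => e; move: lj; rewrite -e inordK; lia.
have iv : forall j : nat, (j <= d)%N ->
    (\sum_(h < d.+1 | (j <= h)%N) U h == \sum_(h < d.+1 | (j <= h)%N) (E h)^T)%MS.
  move=> j jd; apply: (Gside hA rk fullV) => h l hj lj.
  have hd := ltn_ord h; have ld := ltn_ord l.
  have h0' : U (inord (d - 0)) *m (A - (th (inord (d - 0)))%:M)^T = 0.
    have -> : inord (d - 0) = ord_max :> 'I_d.+1.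
      by apply: val_inj; rewrite /= inordK subn0.
    by move/eqP: hmax.
  have hs' : forall k, (0 < k <= d)%N ->
      (U (inord (d - k)) *m (A - (th (inord (d - k)))%:M)^T
        <= U (inord (d - k.-1)))%MS.
    move=> k /andP [k0 kd].
    have := hup (inord (d - k)); rewrite /act inordK; last lia.
    have -> : ((d - k).+1 = d - k.-1)%N by lia.
    move=> /(_ _) /andP [] //; lia.
  have := @kerlem K d A (fun k => th (inord (d - k))) (fun k => U (inord (d - k)))
    h0' hs' (d - h) _ (pE th l).
  have -> : inord (d - (d - h)) = h by apply: val_inj; rewrite /= inordK; lia.
  rewrite horner_pE; apply; first lia.
  apply: dvd_pE => //.
    rewrite map_inj_in_uniq ?iota_uniq // => a b.
    rewrite !mem_iota /= !add0n => ha hb /injA /(congr1 val).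
    rewrite /= !inordK; lia.
  move=> z /mapP [a]; rewrite mem_iota add0n => /andP [_ ha] ->.
  exists (inord (d - a)) => //; apply/eqP => e; move: lj; rewrite -e inordK; lia.
have s0 (F : 'I_d.+1 -> 'M[K]_d.+1) :
    (\sum_(h < d.+1 | (h <= 0)%N) F h)%MS = F ord0.
  by apply: big_pred1 => h; rewrite /= leqn0.
have sd (F : 'I_d.+1 -> 'M[K]_d.+1) :
    (\sum_(h < d.+1 | (d <= h)%N) F h)%MS = F ord_max.
  apply: big_pred1 => h /=.
  by rewrite -val_eqE /= eqn_leq (ltnSE (ltn_ord h)).
have hi' : (i <= d)%N by rewrite -ltnS.
split.
- have e1 : (\sum_(h < d.+1 | (h <= i)%N) act (A ^+ h) (act (Es ord0) V)
     = \sum_(h < d.+1 | (h <= i)%N) (Es ord0)^T *m (A ^+ h)^T)%MS.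
    by apply: eq_bigr => h _; rewrite actV.
  have e2 : (\sum_(h < d.+1 | (h <= i)%N) U h
     = \sum_(h < d.+1 | (h <= i)%N) U (inord h))%MS.
    by apply: eq_bigr => h _; rewrite inord_val.
  rewrite e1 e2; apply: (@krylov K d A (fun k => th (inord k)) (fun k => U (inord k)) ((Es ord0)^T)) => //.
    have := ii 0%N; rewrite !s0.
    have -> : inord 0 = ord0 :> 'I_d.+1 by apply: val_inj; rewrite /= inordK.
    by case/andP => a b; apply/andP; split.
  move=> k kd; have := hup (inord k); rewrite /act inordK; last exact: ltnW.
  by apply.
- by rewrite (eq_bigr _ (fun h _ => actV (Es h))); exact: ii.
- have e3 : (\sum_(h < d.+1 | (i <= h)%N) U h
     = \sum_(k < d.+1 | (k <= d - i)%N) U (inord (d - k)))%MS.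
    rewrite (reindex_inj rev_ord_inj) /=; apply: eq_big => k.
      have := ltn_ord k; rewrite /= subSS => kd.
      by apply/idP/idP => ?; lia.
    move=> _; congr (U _); apply: val_inj; rewrite /= inordK; have := ltn_ord k; lia.
  have e4 : (\sum_(h < d.+1 | (h <= d - i)%N) act (As ^+ h) (act (E ord_max) V)
     = \sum_(h < d.+1 | (h <= d - i)%N) (E ord_max)^T *m (As ^+ h)^T)%MS.
    by apply: eq_bigr => h _; rewrite actV.
  rewrite e3 e4.
  apply: (@krylov K d As (fun k => ths (inord (d - k))) (fun k => U (inord (d - k))));
    last exact: leq_subr.
    have := iv d (leqnn d); rewrite !sd.
    have -> : inord (d - 0) = ord_max :> 'I_d.+1.
      by apply: val_inj; rewrite /= inordK subn0.
    by case/andP => a b; apply/andP; split.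
  move=> k kd; have := hdown (inord (d - k)); rewrite /act inordK; last lia.
  have -> : ((d - k).-1 = d - k.+1)%N by lia.
  by apply; lia.
- by rewrite (eq_bigr _ (fun h _ => actV (E h))); exact: iv.
rewrite (eq_bigr _ (fun h _ => actV (Es h))) (eq_bigr _ (fun h _ => actV (E h))).
have Wi := ii i; have Wi' := iv i hi'.
set S := (\sum_(h < d.+1 | (h <= i)%N) (Es h)^T)%MS in Wi *.
set S' := (\sum_(h < d.+1 | (i <= h)%N) (E h)^T)%MS in Wi' *.
have sub : (U i <= S :&: S')%MS.
  rewrite sub_capmx; apply/andP; split.
    apply: submx_trans (proj1 (andP Wi)); exact: (sumsmx_sup i).
  apply: submx_trans (proj1 (andP Wi')); exact: (sumsmx_sup i).
apply/andP; split => //; rewrite -(mxrank_leqif_sup sub) rk.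
have rS : \rank S = #|[pred h : 'I_d.+1 | (h <= i)%N]|.
  by rewrite -(eqmx_rank Wi) (rank_sub rk fullV).
have rS' : \rank S' = #|[pred h : 'I_d.+1 | (i <= h)%N]|.
  by rewrite -(eqmx_rank Wi') (rank_sub rk fullV).
have rSS : \rank (S + S')%MS = d.+1.
  apply/eqP; rewrite eqn_leq rank_leq_col /=.
  rewrite -{1}(mxrank1 K d.+1); apply: mxrankS.
  apply: submx_trans (proj2 (andP fullV)) _; apply/sumsmx_subP => h _.
  case: (leqP h i) => hh.
    apply: submx_trans (addsmxSl S S'); apply: submx_trans (proj1 (andP Wi)).
    exact: (sumsmx_sup h).
  apply: submx_trans (addsmxSr S S'); apply: submx_trans (proj1 (andP Wi')).
  by apply: (sumsmx_sup h) => //; exact: ltnW.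
have := mxrank_sum_cap S S'; rewrite rS rS' rSS.
have := cardUI [pred h : 'I_d.+1 | (h <= i)%N] [pred h : 'I_d.+1 | (i <= h)%N].
have -> : #|[predU [pred h : 'I_d.+1 | (h <= i)%N] & [pred h : 'I_d.+1 | (i <= h)%N]]| = d.+1.
  rewrite eq_cardT; first exact: size_enum_ord.
  by move=> h; rewrite !inE; exact: leq_total.
have -> : #|[predI [pred h : 'I_d.+1 | (h <= i)%N] & [pred h : 'I_d.+1 | (i <= h)%N]]| = 1%N.
  apply: eq_card1 => h; rewrite !inE -eqn_leq; exact: val_eqE.
move=> e1 e2; apply/eqP; apply/eqP; rewrite eq_sym -(eqn_add2l d.+1) e2 -e1.
by apply/eqP.
Qed.
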